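(* Fix $0<d<1$ and let $c(x)=x^d$. For common slot instances, the price of anarchy of the coordination mechanism described in the context is $\Theta(1)$; that is, there is a constant $K_d$ depending only on $d$ such that for every common slot instance with cost function $c$ and every Nash equilibrium $(s,\xi)$ of the mechanism, $C(s)\le K_d\cdot\min_{s^*}C(s^* )$.
   Context: A game consists of a cost function $c$ (here $c(x)=x^d$, $c(0)=0$), slots $t=1,\dots,T$, and a set of jobs, each job $j$ having integer release time $r_j$ and deadline $d_j$ with $0<r_j<d_j<T$. A common slot instance is one in which some slot lies in $[r_j,d_j)$ for every job $j$ (equivalently, an optimal assignment uses a single slot). An assignment $s$ gives each job a slot $s_j$ with $r_j\le s_j<d_j$; the load is $l_t(s)=|\{j:s_j=t\}|$ and $C(s)=\sum_{t=1}^T c(l_t(s))$; the minimum is over all assignments. In the coordination mechanism, each job $j$ chooses a pair $(s_j,\xi_j)$ with $s_j\in[r_j,d_j)$ and payment $\xi_j\ge0$. Slot $t$ is opened iff $\sum_{j:s_j=t}\xi_j\ge c(l_t(s))$; a job whose slot is not opened has infinite cost, otherwise its cost is $\xi_j$. A profile $(s,\xi)$ is a Nash equilibrium if for every job $j$: (i) $\sum_{j':s_{j'}=s_j}\xi_{j'}\ge c(l_{s_j}(s))$; (ii) for every $t\in[r_j,d_j)\setminus\{s_j\}$, $\xi_j\le\max\{0,\,c(l_t(s)+1)-\sum_{j':s_{j'}=t}\xi_{j'}\}$; (iii) $\xi_j\le\max\{0,\,c(l_{s_j}(s))-\sum_{j':s_{j'}=s_j,\,j'\ne j}\xi_{j'}\}$.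 *)

(* Defs.v *)
From HB Require Import structures.
From mathcomp Require Import all_boot all_order all_algebra.
From mathcomp Require Import reals exp.
Set Implicit Arguments. Unset Strict Implicit. Unset Printing Implicit Defensive.
Import Order.TTheory GRing.Theory Num.Theory.
Local Open Scope ring_scope.

(* Cost function c(x) = x^d on natural loads; note powR 0 d = 0 for d <> 0,
   so c(0) = 0 when 0 < d. *)
Definition cost {R : realType} (d : R) (x : nat) : R := (x%:R : R) `^ d.

Definition valid_instance (n T : nat) (r dl : 'I_n -> nat) : Prop :=
  forall j, (0 < r j)%N /\ (r j < dl j)%N /\ (dl j < T)%N.

Definition common_slot (n T : nat) (r dl : 'I_n -> nat) : Prop :=
  exists t : nat, forall j, (r j <= t)%N /\ (t < dl j)%N.

Definition feasible (n : nat) (r dl : 'I_n -> nat) (s : 'I_n -> nat) : Prop :=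
  forall j, (r j <= s j)%N /\ (s j < dl j)%N.

Definition load (n : nat) (s : 'I_n -> nat) (t : nat) : nat :=
  #|[set j : 'I_n | s j == t]|.

Definition total_cost {R : realType} (d : R) (n T : nat) (s : 'I_n -> nat) : R :=
  \sum_(1 <= t < T.+1) cost d (load s t).

Definition paid {R : realType} (n : nat) (s : 'I_n -> nat) (xi : 'I_n -> R) (t : nat) : R :=
  \sum_(j' : 'I_n | s j' == t) xi j'.

Definition nash_eq {R : realType} (d : R) (n : nat) (r dl : 'I_n -> nat)
    (s : 'I_n -> nat) (xi : 'I_n -> R) : Prop :=
  feasible r dl s /\
  (forall j, 0 <= xi j) /\
  forall j,
    (* (i) the slot of j is opened *)
    cost d (load s (s j)) <= paid s xi (s j) /\
    (* (ii) no profitable deviation to another slot *)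
    (forall t, (r j <= t)%N -> (t < dl j)%N -> t <> s j ->
       xi j <= Num.max 0 (cost d (load s t).+1 - paid s xi t)) /\
    (* (iii) no overpayment *)
    xi j <= Num.max 0 (cost d (load s (s j)) -
                       \sum_(j' : 'I_n | (s j' == s j) && (j' != j)) xi j').

(* Main.v *)
Require Import Defs.
From HB Require Import structures.
From mathcomp Require Import all_boot all_order all_algebra.
From mathcomp Require Import reals exp.
From mathcomp Require Import ring lra zify.
Import Order.TTheory GRing.Theory Num.Theory.
Local Open Scope ring_scope.
Set Implicit Arguments. Unset Strict Implicit.

Lemma chain_left (R : realType) (f : nat -> R) (q : R) (a0 b : nat) :
  0 <= q -> q < 1 -> (forall t, 0 <= f t) ->
  (forall t t', (a0 <= t)%N -> (t < t')%N -> (t' < b)%N -> 0 < f t -> f t' <= q * f t) ->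
  forall i a m, 0 <= m -> (a0 <= a)%N -> (a + i = b)%N -> (forall t, (a <= t < b)%N -> f t <= m) ->
  \sum_(a <= t < b) f t <= m / (1 - q).
Proof.
move=> q0 q1 f0 Hq; have q1' : 0 < 1 - q by rewrite subr_gt0.
elim=> [|i IH] a m m0 a0a.
  rewrite addn0 => <- _; rewrite big_geq // divr_ge0 // ltW //.
move=> eab Hm.
have ab : (a < b)%N by rewrite -eab; lia.
rewrite big_ltn //.
have [fa0|] := ltP 0 (f a).
  have := IH a.+1 (q * f a) (mulr_ge0 q0 (f0 a)) ltac:(lia) ltac:(lia).
  move=> /(_ (fun t Ht => Hq a t a0a ltac:(lia) ltac:(lia) fa0)) H.
  have Hma : f a <= m by apply: Hm; lia.
  have : f a + q * f a / (1 - q) = f a / (1 - q) by field; rewrite gt_eqF.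
  move=> E.
  apply: (le_trans (lerD (lexx _) H)); rewrite E.
  by rewrite ler_pM2r ?invr_gt0.
move=> fa; have -> : f a = 0 by apply/eqP; rewrite eq_le fa f0.
rewrite add0r; apply: (IH a.+1 m m0); [lia|lia|].
by move=> t Ht; apply: Hm; lia.
Qed.

Lemma chain_right (R : realType) (f : nat -> R) (q : R) (a b0 : nat) :
  0 <= q -> q < 1 -> (forall t, 0 <= f t) ->
  (forall t t', (a <= t')%N -> (t' < t)%N -> (t < b0)%N -> 0 < f t -> f t' <= q * f t) ->
  forall i b m, 0 <= m -> (b <= b0)%N -> (a + i = b)%N -> (forall t, (a <= t < b)%N -> f t <= m) ->
  \sum_(a <= t < b) f t <= m / (1 - q).
Proof.
move=> q0 q1 f0 Hq; have q1' : 0 < 1 - q by rewrite subr_gt0.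
elim=> [|i IH] b m m0 bb0.
  rewrite addn0 => <- _; rewrite big_geq // divr_ge0 // ltW //.
move=> eab Hm.
have ab : (a < b)%N by rewrite -eab; lia.
have -> : b = b.-1.+1 by lia.
rewrite big_nat_recr /=; last lia.
have [fa0|] := ltP 0 (f b.-1).
  have := IH b.-1 (q * f b.-1) (mulr_ge0 q0 (f0 _)) ltac:(lia) ltac:(lia).
  move=> /(_ (fun t Ht => Hq b.-1 t ltac:(lia) ltac:(lia) ltac:(lia) fa0)) H.
  have Hma : f b.-1 <= m by apply: Hm; lia.
  have E : q * f b.-1 / (1 - q) + f b.-1 = f b.-1 / (1 - q) by field; rewrite gt_eqF.
  apply: (le_trans (lerD H (lexx _))); rewrite E.
  by rewrite ler_pM2r ?invr_gt0.
move=> fa; have -> : f b.-1 = 0 by apply/eqP; rewrite eq_le fa f0.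
rewrite addr0; apply: (IH b.-1 m m0); [lia|lia|].
by move=> t Ht; apply: Hm; lia.
Qed.

Lemma ind_sum (x T : nat) : \sum_(1 <= t < T.+1) (x == t : nat)%N = (1 <= x <= T)%N.
Proof.
elim: T => [|T IH]; first by rewrite big_geq //; lia.
rewrite big_nat_recr //= IH. case: eqP; lia.
Qed.

Lemma load_sum n (s : 'I_n -> nat) T : (forall j, (1 <= s j <= T)%N) ->
  (\sum_(1 <= t < T.+1) load s t)%N = n.
Proof.
move=> Hs; rewrite /load.
under eq_bigr => t _ do rewrite -sum1dep_card big_mkcond.
rewrite exchange_big /=.
under eq_bigr => j _.
  have -> : \sum_(1 <= i < T.+1) (if s j == i then 1 else 0) = \sum_(1 <= i < T.+1) (s j == i : nat).
    by apply: eq_bigr => i _; case: eqP.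
  rewrite ind_sum Hs.
  over.
by rewrite sum1_card card_ord.
Qed.

Lemma cost0 (R : realType) (d : R) : 0 < d -> cost d 0 = 0.
Proof. by move=> d0; rewrite /cost powR0 // gt_eqF. Qed.

Lemma cost_ge0 (R : realType) (d : R) l : 0 <= cost d l.
Proof. exact: powR_ge0. Qed.

Lemma cost_le (R : realType) (d : R) a b : 0 <= d -> (a <= b)%N -> cost d a <= cost d b.
Proof.
move=> d0 ab; apply: ge0_ler_powR => //; rewrite ?nnegrE ?ler_nat //.
Qed.

Lemma load_le n (s : 'I_n -> nat) t : (load s t <= n)%N.
Proof. by rewrite /load; apply: leq_trans (max_card _) _; rewrite card_ord. Qed.

Lemma load_gt0 n (s : 'I_n -> nat) t : (0 < load s t)%N -> exists j, s j = t.
Proof.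
rewrite /load card_gt0 => /set0Pn [j]; rewrite inE => /eqP; by exists j.
Qed.

Lemma paid_le (R : realType) n (s : 'I_n -> nat) (xi : 'I_n -> R) t M :
  (forall j, s j = t -> xi j <= M) -> paid s xi t <= (load s t)%:R * M.
Proof.
move=> H; rewrite /paid /load.
apply: (le_trans (ler_sum _ (fun j Hj => H j (eqP Hj)))).
by rewrite -sum1dep_card natr_sum mulr_suml; apply: ler_sum => j _; rewrite mul1r.
Qed.

Lemma cost_lb (R : realType) (d : R) n l : 0 < d -> d < 1 -> (l <= n)%N ->
  l%:R / n%:R * cost d n <= cost d l.
Proof.
move=> d0 d1 ln.
case: l ln => [|l] ln; first by rewrite cost0 // mulr0n !mul0r.
have n0 : (0 < n%:R :> R) by rewrite ltr0n; lia.
have -> : cost d l.+1 = (l.+1%:R / n%:R) `^ d * cost d n.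
  by rewrite /cost -powRM ?divr_ge0 // divfK // gt_eqF.
apply: ler_wpM2r; first exact: cost_ge0.
apply: ger1_powR; last exact: ltW.
rewrite divr_gt0 // ?ltr0n // ler_pdivrMr // mul1r ler_nat //.
Qed.
Lemma young_step (R : realType) (d y : R) : 0 < d -> d < 1 -> 0 < y ->
  (y+1) `^ d <= y `^ d + d * y `^ d / y.
Proof.
move=> d0 d1 y0.
have d1' : 0 < 1 - d by rewrite subr_gt0.
have := @conjugate_powR R ((y+1)`^d) (y `^ (1-d)) d^-1 (1-d)^-1 (powR_ge0 _ _)
  (powR_ge0 _ _) ltac:(by rewrite invr_gt0) ltac:(by rewrite invr_gt0) ltac:(by rewrite !invrK addrC subrK).
rewrite -!powRrM mulfV ?gt_eqF // mulfV ?gt_eqF // !powRr1 ?(ltW y0) //; last first.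
  by rewrite addr_ge0 // ltW.
rewrite !invrK.
have P0 : 0 < y `^ d by rewrite powR_gt0.
rewrite powRB ?powRr1 ?(ltW y0) ?gt_eqF ?implybT // => H.
have yP : 0 < y / y `^ d by rewrite divr_gt0.
rewrite -(ler_pM2r yP); apply: (le_trans H).
have -> : (y `^ d + d * y `^ d / y) * (y / y `^ d) = y + d.
  by field; rewrite !gt_eqF.
lra.
Qed.
Lemma ratio_step (R : realType) (d y y' : R) : 0 < d -> d < 1 -> 0 < y -> 0 < y' ->
  y `^ d <= y * (d * y' `^ d / y') -> y' `^ d <= d `^ (d / (1 - d)) * y `^ d.
Proof.
move=> d0 d1 y0 y'0 H.
have d1' : 0 < 1 - d by rewrite subr_gt0.
set x := y' / y.
have x0 : 0 < x by rewrite divr_gt0.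
have ey : y' = x * y by rewrite /x divfK ?gt_eqF.
have Py : 0 < y `^ d by rewrite powR_gt0.
have Px : 0 < x `^ d by rewrite powR_gt0.
rewrite ey powRM ?(ltW x0) ?(ltW y0) // in H *.
have H2 : x <= d * x `^ d.
  have H3 : y `^ d * x <= y `^ d * (d * x `^ d).
    have -> : y `^ d * (d * x `^ d) = (y * (d * (x `^ d * y `^ d) / (x * y))) * x.
      by field; rewrite !gt_eqF.
    by rewrite ler_pM2r.
  by rewrite -(ler_pM2l Py).
have H4 : x `^ (1 - d) <= d.
  rewrite powRB ?gt_eqF ?implybT // powRr1 ?(ltW x0) //.
  by rewrite ler_pdivrMr.
rewrite ler_pM2r //.
have -> : x `^ d = (x `^ (1 - d)) `^ (d / (1 - d)).
  by rewrite -powRrM; congr (_ `^ _); field; rewrite gt_eqF.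
apply: ge0_ler_powR => //.
- by rewrite divr_ge0 ?ltW.
- by rewrite nnegrE powR_ge0.
- by rewrite nnegrE ltW.
Qed.

Lemma q_lt1 (R : realType) (d : R) : 0 < d -> d < 1 -> 0 <= d `^ (d / (1 - d)) < 1.
Proof.
move=> d0 d1; have d1' : 0 < 1 - d by rewrite subr_gt0.
rewrite powR_ge0 /=.
have := @gt0_ltr_powR R (d / (1 - d)) ltac:(by rewrite divr_gt0) d 1.
rewrite powR1; apply => //; rewrite nnegrE ?ltW //.
Qed.

Lemma key (R : realType) (d : R) n (r dl : 'I_n -> nat) s xi t t' :
  0 < d -> d < 1 -> nash_eq d r dl s xi -> (0 < load s t)%N ->
  (forall j, s j = t -> (r j <= t')%N /\ (t' < dl j)%N) -> t' <> t ->
  cost d (load s t') <= d `^ (d / (1 - d)) * cost d (load s t).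
Proof.
move=> d0 d1 [Hf [Hxi0 Hne]] lt ht tt'.
have /andP [q0 q1] := q_lt1 d0 d1.
case El': (load s t') => [|l'].
  by rewrite cost0 // mulr_ge0 // cost_ge0.
have [j' ej'] := load_gt0 (s:=s) (t:=t') ltac:(by rewrite El').
have Hp' : cost d l'.+1 <= paid s xi t' by have := (Hne j').1; rewrite ej' El'.
set D := cost d l'.+2 - cost d l'.+1.
have HD : forall j, s j = t -> xi j <= D.
  move=> j ej; have [Hr Hd] := ht j ej.
  have := (Hne j).2.1 t' Hr Hd ltac:(by rewrite ej).
  move=> H; apply: (le_trans H); rewrite ge_max; apply/andP; split.
    by rewrite subr_ge0 cost_le // ltW.
  by rewrite El' /D lerD2l lerN2.
have HDb : D <= d * cost d l'.+1 / l'.+1%:R.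
  rewrite /D /cost.
  have := young_step d0 d1 (y := l'.+1%:R) ltac:(by rewrite ltr0n).
  have -> : (l'.+2)%:R = l'.+1%:R + 1 :> R by rewrite -natr1.
  by rewrite lerBlDl.
have Hpt : paid s xi t <= (load s t)%:R * D := paid_le HD.
have [j ej] := load_gt0 lt.
have Hc : cost d (load s t) <= paid s xi t by have := (Hne j).1; rewrite ej.
apply: (ratio_step d0 d1 (y := (load s t)%:R) (y' := l'.+1%:R)); rewrite ?ltr0n //.
apply: (le_trans Hc); apply: (le_trans Hpt); apply: ler_wpM2l => //.
Qed.

Theorem theorem5 (R : realType) (d : R) (hd0 : 0 < d) (hd1 : d < 1) :
  exists K : R, forall (n T : nat) (r dl : 'I_n -> nat),
    valid_instance T r dl -> common_slot T r dl ->
    forall (s : 'I_n -> nat) (xi : 'I_n -> R),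
      nash_eq d r dl s xi ->
      forall sstar : 'I_n -> nat, feasible r dl sstar ->
        total_cost d T s <= K * total_cost d T sstar.
Proof.
have /andP [q0 q1] := q_lt1 hd0 hd1.
set q := d `^ (d / (1 - d)) in q0 q1.
have q1' : 0 < 1 - q by rewrite subr_gt0.
exists (1 + 2 / (1 - q)).
move=> n T r dl Hv [t0 Ht0] s xi Hne sstar Hfs.
have K0 : 0 <= 1 + 2 / (1 - q) by rewrite addr_ge0 // divr_ge0 // ltW.
have fle : forall t, cost d (load s t) <= cost d n.
  by move=> t; apply: cost_le (ltW hd0) (load_le s t).
have Hlb : cost d n <= total_cost d T sstar.
  have [n0|n0] := posnP n.
    have -> : cost d n = 0 by rewrite n0 cost0.
    by rewrite /total_cost sumr_ge0 // => t _; exact: cost_ge0.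
  rewrite /total_cost.
  have H1 : \sum_(1 <= t < T.+1) ((load sstar t)%:R / n%:R * cost d n)
            <= \sum_(1 <= t < T.+1) cost d (load sstar t).
    by apply: ler_sum => t _; apply: cost_lb => //; exact: load_le.
  apply: le_trans H1.
  rewrite -mulr_suml -mulr_suml -natr_sum load_sum ?mulfV ?mul1r //.
    by rewrite pnatr_eq0 -lt0n.
  move=> j; have [a [b c]] := Hv j; have [e f] := Hfs j; lia.
have Hub : total_cost d T s <= (1 + 2 / (1 - q)) * cost d n.
  have [n0|n0] := posnP n.
    rewrite /total_cost big1 ?mulr_ge0 ?cost_ge0 // => t _.
    have : (load s t <= 0)%N by rewrite -n0 load_le.
    rewrite leqn0 => /eqP ->; exact: cost0.
  pose j0 : 'I_n := Ordinal n0.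
  have [Hr0 Hd0] := Ht0 j0; have [a [b c]] := Hv j0.
  have [Hf _] := Hne.
  set f := fun t => cost d (load s t).
  have posl : forall t, 0 < f t -> (0 < load s t)%N.
    move=> t; rewrite /f; case: (load s t) => [|l] //; by rewrite cost0 // ltxx.
  have HL : \sum_(1 <= t < t0) f t <= cost d n / (1 - q).
    apply: (@chain_left R f q 1 t0 q0 q1 (fun t => cost_ge0 _ _) _ (t0 - 1) 1 (cost d n) (cost_ge0 _ _) (leqnn 1) ltac:(lia) (fun t _ => fle t)).
    move=> t t' _ tt' t't0 ft; apply: (key hd0 hd1 Hne (posl t ft)).
      move=> j ej; have [e1 e2] := Hf j; have [e3 e4] := Ht0 j; lia.
    lia.
  have HR : \sum_(t0.+1 <= t < T.+1) f t <= cost d n / (1 - q).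
    apply: (@chain_right R f q t0.+1 T.+1 q0 q1 (fun t => cost_ge0 _ _) _ (T.+1 - t0.+1) T.+1 (cost d n) (cost_ge0 _ _) (leqnn _) ltac:(lia) (fun t _ => fle t)).
    move=> t t' t0t' t't tT ft; apply: (key hd0 hd1 Hne (posl t ft)).
      move=> j ej; have [e1 e2] := Hf j; have [e3 e4] := Ht0 j; lia.
    lia.
  rewrite /total_cost (@big_cat_nat _ _ _ t0) /=; [|lia|lia].
  rewrite (@big_ltn _ _ _ t0) /=; last lia.
  apply: le_trans (lerD HL (lerD (fle t0) HR)) _.
  rewrite le_eqVlt; apply/orP; left; apply/eqP; field.
  by rewrite gt_eqF.
by apply: (le_trans Hub); apply: ler_wpM2l.
Qed.
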